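(* Let $k\geq2$ and for $\lambda>0$ consider the uniform mixture of $\mathcal D_1,\dots,\mathcal D_k$ where $\mathcal D_i=\mathcal N(\lambda e_i, I_k)$ on $\mathbb R^k$ ($e_i$ the $i$-th standard basis vector). Let $Z$ be a sample from the mixture and $J$ the index of the component it was drawn from. Then one can choose $\lambda=\Theta(\sqrt{\log k})$ such that every estimator $\Psi$ (not necessarily efficiently computable) satisfies $\mathbb P(\Psi(Z)\neq J)\geq c$ for some absolute constant $c>0$. *)

(* Defs.v *)
From HB Require Import structures.
From mathcomp Require Import all_boot all_order all_algebra.
From mathcomp Require Import all_classical all_reals all_analysis.
Set Implicit Arguments. Unset Strict Implicit. Unset Printing Implicit Defensive.
Import Order.TTheory GRing.Theory Num.Theory.
Local Open Scope classical_set_scope.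
Local Open Scope ring_scope.

(* Points of R^n are n-tuples of reals ('n.-tuple R',
   equipped by the library with the product sigma-algebra generated by the
   coordinate projections). *)

(* [gauss_iint n f m] = E[f(X)] where X = (X_0,...,X_{n-1}) has independent
   coordinates X_j ~ N(m j, 1), i.e. X ~ N(m, I_n).  It is the iterated
   integral against the product of the one-dimensional normal laws
   [normal_prob (m j) 1]; for nonnegative measurable f this is the integral
   against the product measure N(m, I_n) (Tonelli). *)
Fixpoint gauss_iint {R : realType} (n : nat) :
  (n.-tuple R -> \bar R) -> (nat -> R) -> \bar R :=
  match n with
  | 0 => fun f _ => f [tuple]
  | n'.+1 => fun f m =>
      (\int[normal_prob (m 0%N) 1]_x
          gauss_iint (fun t : n'.-tuple R => f [tuple of x :: t])
                     (fun j => m j.+1))%E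
  end.

Definition comp_mean {R : realType} (lambda : R) (i : nat) : nat -> R :=
  fun j => if j == i then lambda else 0.

(* P(Psi(Z) <> J) for (J, Z) with J uniform on {0..k-1} and Z | J = i ~ D_i. *)
Definition mixture_error {R : realType} (k : nat) (lambda : R)
  (Psi : k.-tuple R -> 'I_k) : \bar R :=
  ((k%:R)^-1%:E * \sum_(i < k)
      gauss_iint (fun z => ((Psi z != i)%:R)%:E) (comp_mean lambda i))%E.

Definition measurable_estimator {R : realType} (k : nat)
  (Psi : k.-tuple R -> 'I_k) : Prop :=
  forall i : 'I_k, measurable (Psi @^-1` [set i]).

(* Main.v *)
Require Import Defs.
From HB Require Import structures.
From mathcomp Require Import all_boot all_order all_algebra.
From mathcomp Require Import all_classical all_reals all_analysis.
From mathcomp Require Import measurable_realfun.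
From mathcomp Require Import ring lra.
Import Order.TTheory GRing.Theory Num.Theory.
Import HBNNSimple.

Module MH1.
Local Open Scope ring_scope.
Local Open Scope ereal_scope.

Section lower.
Context d (T : measurableType d) (R : realType).
Variable mu : {measure set T -> \bar R}.

Lemma lmono (f g : T -> \bar R) : (forall x, 0 <= f x) -> (forall x, f x <= g x) ->
  \int[mu]_x f x <= \int[mu]_x g x.
Proof.
move=> f0 fg.
have g0 : forall x, 0 <= g x by move=> x; exact: le_trans (f0 x) (fg x).
rewrite !ge0_integralTE//; apply: ereal_sup_le => _ [h hf <-].
by exists h => // x; exact: le_trans (hf x) (fg x).
Qed.

Lemma lub (f : T -> \bar R) (X : \bar R) : (forall x, 0 <= f x) ->
  (forall u : T -> \bar R, measurable_fun setT u -> (forall x, 0 <= u x) ->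
     (forall x, u x <= f x) -> \int[mu]_x u x <= X) ->
  \int[mu]_x f x <= X.
Proof.
move=> f0 H; rewrite ge0_integralTE//; apply: ge_ereal_sup => _ [h hf <-].
rewrite -integralT_nnsfun; apply: H => //.
- by apply/measurable_EFinP.
- by move=> x; rewrite lee_fin fun_ge0.
Qed.

Lemma lsuperadd (f g : T -> \bar R) : (forall x, 0 <= f x) -> (forall x, 0 <= g x) ->
  \int[mu]_x f x + \int[mu]_x g x <= \int[mu]_x (f x + g x).
Proof.
move=> f0 g0.
have fg0 : forall x, 0 <= f x + g x by move=> x; rewrite adde_ge0.
set S := \int[mu]_x (f x + g x).
have [->|Sne] := eqVneq S +oo; first by rewrite leey.
have S0 : 0 <= S by apply: integral_ge0 => x _.
have Sfin : S \is a fin_num by rewrite ge0_fin_numE// ltey.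
have gS : \int[mu]_x g x <= S by apply: lmono => // x; rewrite leeDr.
have gfin : \int[mu]_x g x \is a fin_num.
  by rewrite ge0_fin_numE ?integral_ge0// (le_lt_trans gS)// ltey.
rewrite -lee_suber_addr//; apply: lub => // u mu0 u0 uf.
have uS : \int[mu]_x u x <= S by apply: lmono => // x; rewrite (le_trans (uf x))// leeDl.
have ufin : \int[mu]_x u x \is a fin_num.
  by rewrite ge0_fin_numE ?integral_ge0// (le_lt_trans uS)// ltey.
rewrite lee_suber_addr// addeC -lee_suber_addr//; apply: lub => // v mv v0 vg.
rewrite lee_suber_addr// addeC -ge0_integralD//.
by apply: lmono => [x|x]; [rewrite adde_ge0|rewrite leeD].
Qed.

Lemma lhomog (c : R) (f : T -> \bar R) : (0 < c)%R -> (forall x, 0 <= f x) ->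
  \int[mu]_x (c%:E * f x) <= c%:E * \int[mu]_x f x.
Proof.
move=> c0 f0; apply: lub => [x|u mu0 u0 uf]; first by rewrite mule_ge0// lee_fin ltW.
have -> : \int[mu]_x u x = \int[mu]_x (c%:E * ((c^-1)%:E * u x)).
  by apply: eq_integral => x _; rewrite muleA -EFinM divff ?gt_eqF// mul1e.
rewrite ge0_integralZl_EFin//; last 3 first.
- by move=> x _; rewrite mule_ge0// lee_fin invr_ge0 ltW.
- by apply: emeasurable_funM => //.
- exact: ltW.
apply: lee_wpmul2l; first by rewrite lee_fin ltW.
apply: lmono => x; first by rewrite mule_ge0// lee_fin invr_ge0 ltW.
have := uf x; rewrite -(@lee_pmul2l _ (c^-1)%:E)// ?lte_fin ?invr_gt0//.
by rewrite muleA -EFinM mulVf ?gt_eqF// mul1e.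
Qed.

End lower.

Section lowerprob.
Context d (T : measurableType d) (R : realType).
Variable mu : {measure set T -> \bar R}.
Hypothesis mu1 : mu setT = 1.

Lemma lconst (c : R) (f : T -> \bar R) : (0 <= c)%R -> (forall x, 0 <= f x) ->
  \int[mu]_x (f x + c%:E) <= \int[mu]_x f x + c%:E.
Proof.
move=> c0 f0; apply: lub => [x|u mu0 u0 uf]; first by rewrite adde_ge0.
pose v x := maxe (u x - c%:E) 0.
have v0 x : 0 <= v x by rewrite /v le_max lexx orbT.
have mv : measurable_fun setT v.
  by apply: measurable_maxe => //; apply: emeasurable_funB.
have uv : \int[mu]_x u x <= \int[mu]_x (v x + c%:E).
  apply: lmono => // x.
  rewrite -{1}(@subeK _ (u x) c%:E)// leeD2r// /v le_max lexx//.
rewrite (le_trans uv)// ge0_integralD//.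
rewrite integral_cst// mu1 mule1 leeD2r//.
apply: lmono => // x; rewrite /v ge_max f0 andbT.
by apply: le_trans (leeB (uf x) (lexx c%:E)) _; rewrite addeK.
Qed.

End lowerprob.

End MH1.
Import MH1.

Module MH2.
Local Open Scope ring_scope.
Local Open Scope ereal_scope.

Section normal.
Context (R : realType).
Local Notation mu := (@lebesgue_measure R).

Lemma intM (a : R) (w : R -> \bar R) : (forall x, 0 <= w x) ->
  measurable_fun setT w ->
  \int[normal_prob a 1]_x w x = \int[mu]_x (w x * (normal_pdf a 1 x)%:E).
Proof.
move=> w0 mw.
have dom := normal_prob_dominates a 1.
rewrite -(Radon_Nikodym_SigmaFinite.change_of_variables dom)//.
apply: ae_eq_integral => //.
- apply: emeasurable_funM => //.
  exact: measurable_int (Radon_Nikodym_SigmaFinite.f_integrable dom).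
- by apply: emeasurable_funM => //; apply/measurable_EFinP; exact: measurable_normal_pdf.
- apply: ae_eqe_mul2l; apply: integral_ae_eq => //.
  + exact: Radon_Nikodym_SigmaFinite.f_integrable dom.
  + by apply/measurable_EFinP; exact: measurable_normal_pdf.
  + by move=> E _ mE; rewrite -Radon_Nikodym_SigmaFinite.f_integral.
Qed.

Lemma pdf_shift (b c x : R) :
  (expR (b * x + c) * normal_pdf 0 1 x = expR (c + b ^+ 2 / 2) * normal_pdf b 1 x)%R.
Proof.
rewrite !normal_pdfE ?oner_neq0 /normal_fun.
rewrite mulrCA -expRD [RHS]mulrCA -expRD; congr (_ * expR _)%R.
rewrite expr1n mulr2n; field. all: exact: isT.
Qed.

Lemma measurable_expaff (b c : R) :
  measurable_fun setT (fun x : R => (expR (b * x + c))%:E).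
Proof.
apply/measurable_EFinP; apply: measurableT_comp => //.
by apply: measurable_funD => //; apply: measurable_funM.
Qed.

Lemma EM (b c : R) :
  \int[normal_prob 0 1]_x (expR (b * x + c))%:E = (expR (c + b ^+ 2 / 2))%:E.
Proof.
rewrite intM//; last exact: measurable_expaff.
under eq_integral => x _ do rewrite -EFinM pdf_shift EFinM.
rewrite ge0_integralZl_EFin//.
- by rewrite integral_normal_pdf mule1.
- by move=> x _; rewrite lee_fin normal_pdf_ge0.
- by apply/measurable_EFinP; exact: measurable_normal_pdf.
Qed.

Lemma ME (l : R) (w : R -> \bar R) : (forall x, 0 <= w x) ->
  measurable_fun setT w ->
  \int[normal_prob 0 1]_x (w x * (expR (l * x - l ^+ 2 / 2))%:E) =
  \int[normal_prob l 1]_x w x.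
Proof.
move=> w0 mw; rewrite !intM//; last 2 first.
- by move=> x; rewrite mule_ge0.
- by apply: emeasurable_funM => //; exact: measurable_expaff.
apply: eq_integral => x _; rewrite -muleA -EFinM pdf_shift.
by rewrite addNr expR0 mul1r.
Qed.

Lemma L4 (l : R) (f : R -> \bar R) : (forall x, 0 <= f x) ->
  \int[normal_prob 0 1]_x (f x * (expR (l * x - l ^+ 2 / 2))%:E) <=
  \int[normal_prob l 1]_x f x.
Proof.
move=> f0; apply: lub => [x|u mu0 u0 uf]; first by rewrite mule_ge0.
pose v x := u x * (expR ((- l) * x + l ^+ 2 / 2))%:E.
have e1 x : (expR ((- l) * x + l ^+ 2 / 2) * expR (l * x - l ^+ 2 / 2) = 1)%R.
  rewrite -expRD.
  have -> : ((- l) * x + l ^+ 2 / 2 + (l * x - l ^+ 2 / 2) = 0)%R.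
    by rewrite addrACA mulNr addNr addrN addr0.
  exact: expR0.
have v0 x : 0 <= v x by rewrite mule_ge0.
have mv : measurable_fun setT v.
  by apply: emeasurable_funM => //; exact: measurable_expaff.
have -> : \int[normal_prob 0 1]_x u x =
    \int[normal_prob 0 1]_x (v x * (expR (l * x - l ^+ 2 / 2))%:E).
  by apply: eq_integral => x _; rewrite /v -muleA -EFinM e1 mule1.
rewrite ME//; apply: lmono => // x; rewrite /v.
have c0 : 0 <= (expR ((- l) * x + l ^+ 2 / 2))%:E by rewrite lee_fin expR_ge0.
apply: (le_trans (lee_wpmul2r c0 (uf x))).
rewrite -muleA -EFinM (mulrC (expR (l * x - _))) e1 mule1.
exact: lexx.
Qed.

End normal.

End MH2.
Import MH2.

Module MH3.
Local Open Scope ring_scope.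
Local Open Scope ereal_scope.

Section G.
Context (R : realType).

Lemma normal1 (a : R) : normal_prob a 1 [set: R] = 1.
Proof. by rewrite /normal_prob integral_normal_pdf. Qed.

Lemma int_cst (a : R) (c : \bar R) : \int[normal_prob a 1]_x c = c.
Proof.
rewrite integral_cst//; rewrite -[RHS]mule1; congr (_ * _); exact: normal1.
Qed.

Lemma G_ge0 n (f : n.-tuple R -> \bar R) m : (forall z, 0 <= f z) ->
  0 <= gauss_iint f m.
Proof.
elim: n f m => [|n IH] f m f0 /=; first exact: f0.
by apply: integral_ge0 => x _; apply: IH.
Qed.

Lemma G_mono n (f g : n.-tuple R -> \bar R) m : (forall z, 0 <= f z) ->
  (forall z, f z <= g z) -> gauss_iint f m <= gauss_iint g m.
Proof.
elim: n f g m => [|n IH] f g m f0 fg /=; first exact: fg.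
apply: lmono => x; first exact: G_ge0.
by apply: IH.
Qed.

Lemma G_cst n (c : \bar R) m : gauss_iint (fun _ : n.-tuple R => c) m = c.
Proof.
elim: n m => [|n IH] m //=.
under eq_integral do rewrite IH.
by rewrite int_cst.
Qed.

Lemma G_homog n (c : R) (f : n.-tuple R -> \bar R) m : (0 < c)%R ->
  (forall z, 0 <= f z) ->
  gauss_iint (fun z => c%:E * f z) m <= c%:E * gauss_iint f m.
Proof.
elim: n f m => [|n IH] f m c0 f0 /=; first by [].
apply: (@le_trans _ _ (\int[normal_prob (m 0%N) 1]_x
   (c%:E * gauss_iint (fun t => f [tuple of x :: t]) (fun j => m j.+1)))).
  apply: lmono => x; first by apply: G_ge0 => z; rewrite mule_ge0// lee_fin ltW.
  exact: IH.
apply: lhomog => // x; exact: G_ge0.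
Qed.

Lemma G_homogr n (c : R) (f : n.-tuple R -> \bar R) m : (0 < c)%R ->
  (forall z, 0 <= f z) ->
  gauss_iint (fun z => f z * c%:E) m <= gauss_iint f m * c%:E.
Proof.
move=> c0 f0.
have -> : (fun z => f z * c%:E) = (fun z => c%:E * f z).
  by apply: funext => z; rewrite muleC.
by rewrite muleC; apply: G_homog.
Qed.

Lemma G_superadd n (f g : n.-tuple R -> \bar R) m : (forall z, 0 <= f z) ->
  (forall z, 0 <= g z) ->
  gauss_iint f m + gauss_iint g m <= gauss_iint (fun z => f z + g z) m.
Proof.
elim: n f g m => [|n IH] f g m f0 g0 /=; first by [].
apply: le_trans; first by apply: lsuperadd => x; apply: G_ge0.
apply: lmono => x; first by rewrite adde_ge0 ?G_ge0.
exact: IH.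
Qed.

Lemma G_constadd n (c : R) (f : n.-tuple R -> \bar R) m : (0 <= c)%R ->
  (forall z, 0 <= f z) ->
  gauss_iint (fun z => f z + c%:E) m <= gauss_iint f m + c%:E.
Proof.
elim: n f m => [|n IH] f m c0 f0 /=; first by [].
apply: (@le_trans _ _ (\int[normal_prob (m 0%N) 1]_x
   (gauss_iint (fun t => f [tuple of x :: t]) (fun j => m j.+1) + c%:E))).
  apply: lmono => x; first by apply: G_ge0 => z; rewrite adde_ge0.
  exact: IH.
apply: lconst => //; first exact: normal1.
move=> x; exact: G_ge0.
Qed.

Lemma G_sum (I : Type) (s : seq I) n (F : I -> n.-tuple R -> \bar R) m :
  (forall i z, 0 <= F i z) ->
  \sum_(i <- s) gauss_iint (F i) m <=
  gauss_iint (fun z => \sum_(i <- s) F i z) m.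
Proof.
move=> F0; elim: s => [|a s IH].
  by rewrite big_nil; apply: G_ge0 => z; rewrite big_nil.
rewrite big_cons.
apply: le_trans; first exact: (leeD2l _ IH).
apply: le_trans; first by apply: G_superadd => // z; exact: sume_ge0.
apply: G_mono => z; first by rewrite adde_ge0// sume_ge0.
by rewrite big_cons.
Qed.

Lemma G_succ n (f : n.+1.-tuple R -> \bar R) m :
  gauss_iint f m = \int[normal_prob (m 0%N) 1]_x
     gauss_iint (fun t : n.-tuple R => f [tuple of x :: t]) (fun j => m j.+1).
Proof. by []. Qed.

Lemma G_single n (g : R -> \bar R) i m : (i < n)%N ->
  gauss_iint (fun z : n.-tuple R => g (nth 0%R z i)) m =
  \int[normal_prob (m i) 1]_x g x.
Proof.
elim: n i m => [|n IH] i m Hi.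
  by exfalso; have := ltn0 i; rewrite Hi.
rewrite G_succ; case: i Hi => [|i] Hi.
  by apply: eq_integral => x _; exact: (G_cst _ (g x)).
transitivity (\int[normal_prob (m 0%N) 1]_x (\int[normal_prob (m i.+1) 1]_y g y)).
  by apply: eq_integral => x _; exact: (IH i (fun j => m j.+1) Hi).
by rewrite int_cst.
Qed.

Lemma G_CM n (l : R) (f : n.-tuple R -> \bar R) i : (i < n)%N ->
  (forall z, 0 <= f z) ->
  gauss_iint (fun z => f z * (expR (l * nth 0%R z i - l ^+ 2 / 2))%:E)
     (fun _ => 0%R) <=
  gauss_iint f (comp_mean l i).
Proof.
elim: n f i => [|n IH] f i Hi f0.
  by exfalso; have := ltn0 i; rewrite Hi.
rewrite !G_succ; case: i Hi => [|i] Hi.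
  have -> : comp_mean l 0 0 = l by rewrite /comp_mean.
  have -> : (fun j => comp_mean l 0 j.+1) = (fun _ => 0%R).
    by apply: funext => j; rewrite /comp_mean.
  apply: le_trans; last first.
    apply: (@L4 R l (fun x => gauss_iint (fun t : n.-tuple R => f [tuple of x :: t]) (fun _ => 0%R))).
    by move=> x; apply: G_ge0.
  apply: lmono => x.
    by apply: G_ge0 => z; rewrite mule_ge0// lee_fin expR_ge0.
  set c := expR (l * x - l ^+ 2 / 2).
  change (gauss_iint (fun t : n.-tuple R => f [tuple of x :: t] * c%:E) (fun _ => 0%R) <=
     gauss_iint (fun t : n.-tuple R => f [tuple of x :: t]) (fun _ => 0%R) * c%:E).
  exact: (@G_homogr n c (fun t : n.-tuple R => f [tuple of x :: t]) _ (expR_gt0 _) (fun t => f0 _)).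
have -> : comp_mean l i.+1 0 = 0%R by rewrite /comp_mean.
have -> : (fun j => comp_mean l i.+1 j.+1) = comp_mean l i.
  by apply: funext => j; rewrite /comp_mean eqSS.
apply: lmono => x.
  by apply: G_ge0 => z; rewrite mule_ge0// lee_fin expR_ge0.
exact: (IH (fun t : n.-tuple R => f [tuple of x :: t]) i Hi (fun t => f0 _)).
Qed.

End G.

End MH3.
Import MH3.

Module MH4.
Local Open Scope ring_scope.

Section num.
Context (R : realType).

Lemma ln2_ge (k : nat) : (2 <= k)%N -> 1 / 4 <= ln (k%:R : R).
Proof.
move=> k2.
have k2R : (2 : R) <= k%:R by rewrite (ler_nat R 2 k).
have e1 : expR (- (1 / 4)) >= 3 / 4 :> R.
  by apply: le_trans (expR_ge1Dx _); lra.
have e2 : expR (1 / 4) <= 4 / 3 :> R.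
  have h : expR (1 / 4) * expR (- (1 / 4)) = 1 :> R by rewrite -expRD addrN expR0.
  have p : 0 < expR (1 / 4) :> R by exact: expR_gt0.
  nra.
rewrite -[X in X <= _](expRK (1/4)).
rewrite ler_ln ?posrE ?expR_gt0//; last by apply: lt_le_trans k2R; lra.
by apply: le_trans e2 _; lra.
Qed.

Lemma numeric (k : nat) (l : R) : (2 <= k)%N ->
  l = 1 / 32 * Num.sqrt (ln (k%:R : R)) ->
  1 / 10 <= k%:R^-1 * (k%:R * (1 - expR (-2))
                        - expR (l * (l + 2) - l ^+ 2 / 2)).
Proof.
move=> k2 hl.
have k2R : (2 : R) <= k%:R by rewrite (ler_nat R 2 k).
have kpos : (0 : R) < k%:R by lra.
set L := ln (k%:R : R).
have L4 : 1 / 4 <= L by exact: ln2_ge.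
set s := Num.sqrt L.
have s0 : 0 <= s by exact: sqrtr_ge0.
have s2 : s ^+ 2 = L by apply: sqr_sqrtr; lra.
have sh : 1 / 2 <= s by nra.
have hl' : l = 1 / 32 * s by rewrite hl.
have X : l * (l + 2) - l ^+ 2 / 2 <= 1 / 4 * L.
  rewrite hl' -s2.
  have hs : s / 2 <= s ^+ 2 by rewrite expr2; nra.
  rewrite expr2 in hs *; nra.
have kE : expR L = k%:R by rewrite /L lnK// posrE.
set w := expR (- (3 / 4 * L)).
have w0 : 0 < w by exact: expR_gt0.
have Tk : expR (l * (l + 2) - l ^+ 2 / 2) / k%:R <= w.
  rewrite -kE -expRN -expRD /w ler_expR; lra.
have w4 : w ^+ 4 * (k%:R * k%:R * k%:R) = 1.
  rewrite !exprS expr0 mulr1 -kE -!expRD.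
  have -> : - (3 / 4 * L) + (- (3 / 4 * L) + (- (3 / 4 * L) + - (3 / 4 * L))) +
     (L + L + L) = 0 by lra.
  exact: expR0.
have k3 : 8 <= k%:R * k%:R * k%:R :> R by nra.
have w35 : w <= 3 / 5.
  have w4' : w ^+ 4 <= 1 / 8.
    have : 0 <= w ^+ 4 by rewrite exprn_ge0 // ltW.
    nra.
  rewrite !exprS expr0 mulr1 in w4'.
  have ww : w * (w * (w * w)) = (w * w) * (w * w) by rewrite !mulrA.
  rewrite ww in w4'.
  rewrite leNgt; apply/negP => h.
  have a : 9 / 25 < w * w by nra.
  have b : 81 / 625 < (w * w) * (w * w) by nra.
  lra.
have e2 : expR (-2) <= 1 / 4 :> R.
  have e1 : 2 <= expR 1 :> R by apply: le_trans (expR_ge1Dx _); lra.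
  have h : expR (-2) * (expR 1 * expR 1) = 1 :> R.
    rewrite -!expRD.
    have -> : (-2 + (1 + 1) = 0 :> R) by lra.
    exact: expR0.
  have p : 0 < expR (-2) :> R by exact: expR_gt0.
  have q : 4 <= expR 1 * expR 1 :> R by nra.
  move: h q p; set y := expR 1 * expR 1; set x := expR (-2); nra.
rewrite mulrBr mulrA mulVf ?gt_eqF// mul1r mulrC.
move: Tk; rewrite mulrC => Tk.
lra.
Qed.

End num.

End MH4.
Import MH4.

Module MH5.
Local Open Scope ring_scope.
Local Open Scope ereal_scope.

Section GM.
Context (R : realType).

Lemma MJ n d (X : measurableType d) (F : X * n.-tuple R -> \bar R) m :
  measurable_fun setT F -> (forall p, 0 <= F p) ->
  measurable_fun setT (fun x => gauss_iint (fun t => F (x, t)) m).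
Proof.
elim: n d X F m => [|n IH] d X F m mF F0 /=.
  exact: measurable_fun_pair1.
pose F' (q : (X * R) * n.-tuple R) := F (q.1.1, [tuple of q.1.2 :: q.2]).
have mF' : measurable_fun setT F'.
  apply: measurableT_comp mF _; apply: measurable_fun_pair => /=.
    by apply: measurableT_comp => //.
  apply: measurable_cons => //.
  by apply: measurableT_comp => //.
have := IH _ _ F' (fun j => m j.+1) mF' (fun q => F0 _).
move=> H.
apply: (@measurable_fun_fubini_tonelli_F _ _ X _ R (normal_prob (m 0%N) 1) _ H).
by move=> q; apply: G_ge0 => t; exact: F0.
Qed.

Lemma msec n (f : n.+1.-tuple R -> \bar R) (x : R) : measurable_fun setT f ->
  measurable_fun setT (fun t : n.-tuple R => f [tuple of x :: t]).
Proof.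
move=> mf; apply: measurableT_comp mf _.
by apply: measurable_cons => //; exact: measurable_cst.
Qed.

Lemma MJ1 n (f : n.+1.-tuple R -> \bar R) m : measurable_fun setT f ->
  (forall z, 0 <= f z) ->
  measurable_fun setT (fun x : R => gauss_iint (fun t : n.-tuple R => f [tuple of x :: t]) m).
Proof.
move=> mf f0.
have mF : measurable_fun setT (fun p : R * n.-tuple R => f [tuple of p.1 :: p.2]).
  by apply: measurableT_comp mf _; apply: measurable_cons.
exact: (@MJ n _ _ _ m mF (fun p => f0 _)).
Qed.

Lemma G_add n (f g : n.-tuple R -> \bar R) m :
  measurable_fun setT f -> measurable_fun setT g ->
  (forall z, 0 <= f z) -> (forall z, 0 <= g z) ->
  gauss_iint (fun z => f z + g z) m = gauss_iint f m + gauss_iint g m.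
Proof.
elim: n f g m => [|n IH] f g m mf mg f0 g0; first by [].
rewrite !G_succ.
transitivity (\int[normal_prob (m 0%N) 1]_x
   (gauss_iint (fun t : n.-tuple R => f [tuple of x :: t]) (fun j => m j.+1) +
    gauss_iint (fun t : n.-tuple R => g [tuple of x :: t]) (fun j => m j.+1))).
  apply: eq_integral => x _.
  exact: (IH (fun t => f [tuple of x :: t]) (fun t => g [tuple of x :: t]) _
             (@msec n f x mf) (@msec n g x mg) (fun t => f0 _) (fun t => g0 _)).
apply: ge0_integralD => //.
- by move=> x _; apply: G_ge0.
- exact: MJ1.
- by move=> x _; apply: G_ge0.
- exact: MJ1.
Qed.

Lemma G_sumE (I : Type) (s : seq I) n (F : I -> n.-tuple R -> \bar R) m :
  (forall i, measurable_fun setT (F i)) -> (forall i z, 0 <= F i z) ->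
  gauss_iint (fun z => \sum_(i <- s) F i z) m = \sum_(i <- s) gauss_iint (F i) m.
Proof.
move=> mF F0; elim: s => [|a s IH].
  rewrite big_nil.
  have -> : (fun z => \sum_(i <- [::]) F i z) = (fun _ => 0).
    by apply: funext => z; rewrite big_nil.
  exact: G_cst.
rewrite big_cons -IH.
have -> : (fun z => \sum_(i <- a :: s) F i z) = (fun z => F a z + \sum_(i <- s) F i z).
  by apply: funext => z; rewrite big_cons.
apply: G_add => //.
- by apply: emeasurable_sum => i; exact: mF.
- by move=> z; apply: sume_ge0.
Qed.

End GM.

End MH5.
Import MH5.

Module MH6.
Local Open Scope classical_set_scope.
Local Open Scope ring_scope.

Section fin.
Context (R : realType).

Lemma memA (x tau : R) : (x \in [set` `]-oo, tau]]) = (x <= tau).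
Proof. by rewrite mem_setE in_itv /=. Qed.

Lemma ptB (k : nat) (l tau : R) (p : 'I_k) (zz : 'I_k -> R) : 0 <= l ->
  \sum_(i < k) (expR (l * zz i - l ^+ 2 / 2) * \1_[set` `]-oo, tau]] (zz i))
  <= \sum_(i < k) ((p != i)%:R * expR (l * zz i - l ^+ 2 / 2)) +
     expR (l * tau - l ^+ 2 / 2).
Proof.
move=> l0.
rewrite (bigD1 p) //= [X in _ <= X + _](bigD1 p) //=.
have -> : ((p != p)%:R : R) = 0 by rewrite eqxx.
rewrite mul0r add0r addrC.
apply: lerD.
  apply: ler_sum => i ip; rewrite eq_sym ip mul1r indicE.
  case: (_ \in _); rewrite ?mulr1 ?mulr0 ?expR_ge0//.
rewrite indicE memA.
have [h|h] := boolP (zz p <= tau); last by rewrite mulr0 expR_ge0.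
rewrite mulr1 ler_expR lerD2r; exact: ler_wpM2l.
Qed.

Local Open Scope ereal_scope.

Lemma hEb (l : R) : (0 <= l)%R ->
  ((1 - expR (-2))%:E <= \int[normal_prob 0 1]_x
     (expR (l * x - l ^+ 2 / 2) * \1_[set` `]-oo, l + 2]] x)%:E).
Proof.
move=> l0.
set tau := (l + 2)%R.
pose rho (x : R) := expR (l * x - l ^+ 2 / 2).
pose g (x : R) := (rho x * \1_[set` `]-oo, tau]] x)%:E.
pose h (x : R) := (rho x * (1 - \1_[set` `]-oo, tau]] x))%:E.
have ind01 (x : R) : (0 <= (\1_[set` `]-oo, tau]] x : R) <= 1)%R.
  by rewrite indicE; case: (_ \in _); rewrite ?ler01 ?lexx.
have mI : measurable_fun setT (\1_[set` `]-oo, tau]] : R -> R).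
  by apply: measurable_indic; exact: measurable_itv.
have mrho : measurable_fun setT rho.
  by apply: measurableT_comp => //; apply: measurable_funD => //; apply: measurable_funM.
have g0 x : 0 <= g x by rewrite lee_fin mulr_ge0 ?expR_ge0//; case/andP: (ind01 x).
have h0 x : 0 <= h x.
  by rewrite lee_fin mulr_ge0 ?expR_ge0// subr_ge0; case/andP: (ind01 x).
have mg : measurable_fun setT g.
  by apply/measurable_EFinP; apply: measurable_funM.
have mh : measurable_fun setT h.
  apply/measurable_EFinP; apply: measurable_funM => //.
  by apply: measurable_funB.
have e1 : \int[normal_prob 0 1]_x g x + \int[normal_prob 0 1]_x h x = 1.
  rewrite -ge0_integralD//.
  transitivity (\int[normal_prob 0 1]_x (expR (l * x + - (l ^+ 2 / 2)))%:E).
    apply: eq_integral => x _; rewrite /g /h -EFinD -mulrDr addrCA subrr addr0 mulr1.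
    by [].
  by rewrite EM addNr expR0.
have e2 : \int[normal_prob 0 1]_x h x <= (expR (-2))%:E.
  have -> : ((-2 : R) = (- (l ^+ 2 / 2) - 2 * tau) + (l + 2) ^+ 2 / 2)%R.
    by rewrite /tau; field.
  rewrite -EM.
  apply: lmono => [x|x]; first exact: h0.
  rewrite /h lee_fin indicE memA.
  have [hx|hx] := boolP (x <= tau)%R; first by rewrite subrr mulr0 expR_ge0.
  rewrite subr0 mulr1 /rho ler_expR.
  move: hx; rewrite -ltNge => hx.
  rewrite mulrDl; lra.
have gfin : \int[normal_prob 0 1]_x g x \is a fin_num.
  rewrite ge0_fin_numE ?integral_ge0//; apply: (@le_lt_trans _ _ 1); last exact: ltey.
  by rewrite -e1 leeDl// integral_ge0.
rewrite EFinB lee_subel_addr// -e1 leeD2l//.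
Qed.

End fin.

End MH6.
Import MH6.

Local Open Scope classical_set_scope.
Local Open Scope ring_scope.

Theorem lemma7p3 (R : realType) :
  exists (c C1 C2 : R), 0 < c /\ 0 < C1 /\ 0 < C2 /\
    forall k : nat, (2 <= k)%N ->
      exists lambda : R,
        C1 * Num.sqrt (ln k%:R) <= lambda /\
        lambda <= C2 * Num.sqrt (ln k%:R) /\
        forall Psi : k.-tuple R -> 'I_k,
          measurable_estimator Psi ->
          (c%:E <= mixture_error lambda Psi)%E.
Proof.
exists (1/10), (1/32), (1/32).
split; first lra. split; first lra. split; first lra.
move=> k k2.
pose l : R := 1/32 * Num.sqrt (ln k%:R).
exists l; split; first exact: lexx. split; first exact: lexx.
move=> Psi mPsi.
have l0 : 0 <= l by rewrite /l mulr_ge0 ?sqrtr_ge0//; lra.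
pose tau : R := l + 2.
pose T : R := expR (l * tau - l ^+ 2 / 2).
pose g (x : R) := (expR (l * x - l ^+ 2 / 2) * \1_[set` `]-oo, l + 2]] x)%:E.
pose F (i : 'I_k) (z : k.-tuple R) :=
  (((Psi z != i)%:R)%:E * (expR (l * nth 0%R z i - l ^+ 2 / 2))%:E)%E.
have F0 i z : (0 <= F i z)%E by rewrite /F mule_ge0// lee_fin ?ler0n ?expR_ge0.
have g0 x : (0 <= g x)%E.
  by rewrite /g lee_fin mulr_ge0 ?expR_ge0// indicE ler0n.
have mF i : measurable_fun setT (F i).
  apply: emeasurable_funM.
    apply/measurable_EFinP.
    have -> : (fun z => ((Psi z != i)%:R : R)) = \1_(~` (Psi @^-1` [set i])).
      apply: funext => z; rewrite indicE.
      have [e|e] := eqVneq (Psi z) i.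
        by rewrite in_setC (mem_set (e : (Psi @^-1` [set i]) z)).
      by rewrite in_setC memNset //=; apply/eqP.
    by apply: measurable_indic; apply: measurableC; exact: mPsi.
  apply/measurable_EFinP.
  have -> : (fun z : k.-tuple R => expR (l * nth 0%R z i - l ^+ 2 / 2)) =
            (fun x => expR (l * x - l ^+ 2 / 2)) \o (fun z => tnth z i).
    by apply: funext => z /=; rewrite (tnth_nth 0).
  apply: measurableT_comp; last exact: measurable_tnth.
  by apply: measurableT_comp => //; apply: measurable_funD => //; apply: measurable_funM.
have hA : (\sum_(i < k) gauss_iint (F i) (fun _ => 0%R)
   <= \sum_(i < k) gauss_iint (fun z => ((Psi z != i)%:R)%:E) (comp_mean l i))%E.
  apply: lee_sum => i _; rewrite /F.
  by apply: G_CM => //.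
have hB : gauss_iint (fun z => \sum_(i < k) F i z) (fun _ => 0%R) =
          (\sum_(i < k) gauss_iint (F i) (fun _ => 0%R))%E.
  exact: G_sumE.
have hC : (gauss_iint (fun z : k.-tuple R => \sum_(i < k) g (nth 0%R z i)) (fun _ => 0%R) <=
           gauss_iint (fun z => \sum_(i < k) F i z) (fun _ => 0%R) + T%:E)%E.
  have hC1 : (gauss_iint (fun z : k.-tuple R => \sum_(i < k) g (nth 0%R z i)) (fun _ => 0%R) <=
     gauss_iint (fun z => \sum_(i < k) F i z + T%:E) (fun _ => 0%R))%E.
    apply: G_mono => z; first by apply: sume_ge0 => i _.
    have FE : forall i, F i z = ((((Psi z != i)%:R : R) * expR (l * nth 0%R z i - l ^+ 2 / 2))%:E).
      by move=> i; rewrite /F EFinM.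
    rewrite (eq_bigr _ (fun i _ => FE i)) /g.
    rewrite !sumEFin -EFinD lee_fin.
    exact: (@ptB R k l (l + 2) (Psi z) (fun i => nth 0%R z i) l0).
  have hC2 : (gauss_iint (fun z => \sum_(i < k) F i z + T%:E) (fun _ => 0%R) <=
     gauss_iint (fun z => \sum_(i < k) F i z) (fun _ => 0%R) + T%:E)%E.
    apply: G_constadd; first by rewrite expR_ge0.
    by move=> z; apply: sume_ge0.
  exact: le_trans hC1 hC2.
have hD : (\sum_(i < k) gauss_iint (fun z : k.-tuple R => g (nth 0%R z i)) (fun _ => 0%R) <=
           gauss_iint (fun z : k.-tuple R => \sum_(i < k) g (nth 0%R z i)) (fun _ => 0%R))%E.
  by apply: G_sum => i z.
have hE : (\sum_(i < k) ((1 - expR (-2)%R)%R%:E) <=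
           \sum_(i < k) gauss_iint (fun z : k.-tuple R => g (nth 0%R z i)) (fun _ => 0%R))%E.
  apply: lee_sum => i _; rewrite G_single; last exact: ltn_ord.
  exact: hEb.
set Aval := (\sum_(i < k) gauss_iint (fun z => ((Psi z != i)%:R)%:E) (comp_mean l i))%E.
have key : ((k%:R * (1 - expR (-2)))%:E <= Aval + T%:E)%E.
  have eqs : (\sum_(i < k) (1 - expR (-2)) = k%:R * (1 - expR (-2)) :> R)%R.
    by rewrite sumr_const card_ord mulr_natl.
  rewrite sumEFin eqs in hE.
  apply: (le_trans hE); apply: (le_trans hD); apply: (le_trans hC).
  by rewrite hB leeD2r.
have key2 : ((k%:R * (1 - expR (-2)) - T)%:E <= Aval)%E.
  by rewrite -(@leeD2rE _ T%:E)// -EFinD subrK.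
rewrite /mixture_error -/Aval.
apply: (le_trans _ (lee_wpmul2l _ key2)); last by rewrite lee_fin invr_ge0 ler0n.
rewrite -EFinM lee_fin.
exact: (@numeric R k l k2 (erefl l)).
Qed.
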